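(* Let $C$ be a closed cone with nonempty interior $\operatorname{int} C$ in a real Banach space $X$, and let $f:\operatorname{int} C \to \operatorname{int} C$ be subhomogeneous and type K order-preserving. Suppose that $f$ has a fixed point in $\operatorname{int} C$ and that, for some $x \in \operatorname{int} C$, the norm closure of the orbit $\mathcal{O}(x,f) = \{f^k(x) : k \in \mathbb{N}\}$ is compact. Then the sequence $f^k(x)$ converges (in norm) to a fixed point of $f$.
   Context: A closed cone is a closed convex set $C \subset X$ with $\lambda C \subset C$ for all $\lambda \ge 0$ and $C \cap (-C) = \{0\}$. It induces the partial order $x \le y$ iff $y - x \in C$. A map $f$ on a domain $D\subseteq X$ is order-preserving if $x \le y$ implies $f(x) \le f(y)$; it is subhomogeneous if $f(tx) \le t f(x)$ for all $t \ge 1$ and $x \in D$. A map $f: D \to X$ is type K order-preserving if for any $x, y \in D$ with $x \le y$ there exists $\epsilon > 0$ such that $f(y) - f(x) \ge \epsilon (y - x)$. *)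

(* Defs.v *)
From HB Require Import structures.
From mathcomp Require Import all_boot all_order all_algebra.
From mathcomp Require Import all_classical all_reals all_analysis.
Set Implicit Arguments. Unset Strict Implicit. Unset Printing Implicit Defensive.
Import Order.TTheory GRing.Theory Num.Theory.
Import numFieldNormedType.Exports.
Local Open Scope classical_set_scope.
Local Open Scope ring_scope.

Section Cones.
Context {R : realType} {X : normedModType R}.

Definition closed_cone (C : set X) : Prop :=
  [/\ closed C,
      (forall x y (t : R), C x -> C y -> 0 <= t -> t <= 1 -> C (t *: x + (1 - t) *: y)),
      (forall (l : R) x, 0 <= l -> C x -> C (l *: x)) &
      (forall x, C x -> C (- x) -> x = 0)].

Definition cle (C : set X) (x y : X) : Prop := C (y - x).

Definition subhomogeneous (C D : set X) (f : X -> X) : Prop :=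
  forall (t : R) x, 1 <= t -> D x -> cle C (f (t *: x)) (t *: f x).

Definition typeK_order_preserving (C D : set X) (f : X -> X) : Prop :=
  forall x y, D x -> D y -> cle C x y ->
    exists eps : R, 0 < eps /\ cle C (eps *: (y - x)) (f y - f x).

End Cones.

(* Main.v *)
Require Import Defs.
From HB Require Import structures.
From mathcomp Require Import all_boot all_order all_algebra.
From mathcomp Require Import all_classical all_reals all_analysis.
From mathcomp Require Import ring lra.
Import Order.TTheory GRing.Theory Num.Theory.
Import numFieldNormedType.Exports.
Local Open Scope classical_set_scope.
Local Open Scope ring_scope.

Set Implicit Arguments. Unset Strict Implicit.
Section Basic.
Context {R : realType} {X : normedModType R} (C : set X).
Hypothesis hC : closed_cone C.

Lemma CZ (l : R) a : 0 <= l -> C a -> C (l *: a).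
Proof. by case: hC => _ _ h _; apply: h. Qed.

Lemma CD a b : C a -> C b -> C (a + b).
Proof.
case: hC => _ hcv _ _ Ca Cb.
have h := hcv a b (2^-1) Ca Cb.
have : C (2 *: (2^-1 *: a + (1 - 2^-1) *: b)).
  by apply: CZ => //; apply: h; lra.
have e1 : 2 * 2^-1 = 1 :> R by field.
have e2 : 2 * (1 - 2^-1) = 1 :> R by field.
by rewrite scalerDr !scalerA e1 e2 !scale1r.
Qed.

Lemma int_ball y : interior C y -> exists2 r : R, 0 < r & forall z, `|z| < r -> C (y + z).
Proof.
rewrite /interior => /nbhs_normP [r r0 hr]; exists r => // z hz.
apply: hr; rewrite /ball_ /= opprD addrA subrr sub0r normrN //.
Qed.

Lemma ball_int y r : 0 < r -> (forall z, `|z| < r -> C (y + z)) -> interior C y.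
Proof.
move=> r0 h; rewrite /interior; apply/nbhs_normP; exists r => // w /= hw.
have -> : w = y + (w - y) by rewrite addrC subrK.
by apply: h; rewrite -normrN opprB.
Qed.

Lemma int_C y : interior C y -> C y.
Proof. by move=> /int_ball [r r0 h]; have := h 0; rewrite normr0 addr0; apply. Qed.

Lemma Capprox v : (forall r : R, 0 < r -> exists c, C c /\ `|v - c| < r) -> C v.
Proof.
case: hC => cl _ _ _ h; apply: cl => B /nbhs_normP [r r0 hr].
have [c [Cc hc]] := h r r0; exists c; split => //; exact: hr.
Qed.

Lemma Clim v w : (forall e : R, 0 < e -> C (v + e *: w)) -> C v.
Proof.
move=> h; apply: Capprox => r r0.
set e := r / (`|w| + 1).
have e0 : 0 < e by rewrite divr_gt0 // ltr_pwDr.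
exists (v + e *: w); split; first exact: h.
rewrite opprD addrA subrr sub0r normrN normrZ gtr0_norm //.
rewrite /e mulrAC ltr_pdivrMr ?ltr_pwDr // ltr_pM2l // ltrDl //.
Qed.

Local Notation le := (cle C).

Lemma ole_refl a : C 0 -> le a a. Proof. by rewrite /cle subrr. Qed.
Lemma ole_trans a b c : le a b -> le b c -> le a c.
Proof. by rewrite /cle => h1 h2; have := CD h2 h1; rewrite addrA subrK. Qed.
Lemma ole_add a b c d : le a b -> le c d -> le (a + c) (b + d).
Proof. by rewrite /cle => h1 h2; have := CD h1 h2; congr C; rewrite opprD addrACA. Qed.
Lemma ole_scale (l : R) a b : 0 <= l -> le a b -> le (l *: a) (l *: b).
Proof. by rewrite /cle -scalerBr; apply: CZ. Qed.
Lemma ole_smono (l m : R) v : l <= m -> C v -> le (l *: v) (m *: v).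
Proof. by move=> hl Cv; rewrite /cle -scalerBl; apply: CZ; rewrite // subr_ge0. Qed.
Lemma ole0 a : le 0 a <-> C a. Proof. by rewrite /cle subr0. Qed.
Lemma ole_antisym a b : le a b -> le b a -> a = b.
Proof.
case: hC => _ _ _ pt; rewrite /cle => h1 h2; apply/eqP; rewrite eq_sym -subr_eq0; apply/eqP.
by apply: pt => //; rewrite opprB.
Qed.

Lemma int_scale y (t : R) : interior C y -> 0 < t -> interior C (t *: y).
Proof.
move=> /int_ball [r r0 h] t0; apply: (@ball_int _ (t * r)); first exact: mulr_gt0.
move=> z hz; have -> : t *: y + z = t *: (y + t^-1 *: z).
  by rewrite scalerDr scalerA mulfV ?gt_eqF // scale1r.
apply: CZ; first exact: ltW.
apply: h; rewrite normrZ gtr0_norm ?invr_gt0 // mulrC ltr_pdivrMr //.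
by rewrite mulrC.
Qed.

Lemma int_add y c : interior C y -> C c -> interior C (y + c).
Proof.
move=> /int_ball [r r0 h] Cc; apply: (ball_int r0) => z hz.
rewrite addrAC; apply: CD => //; exact: h.
Qed.

Lemma int_near y : interior C y -> exists2 r : R, 0 < r &
  forall (d : R) z, 0 < d -> `|z| < d * r -> C (d *: y + z).
Proof.
move=> /int_ball [r r0 h]; exists r => // d z d0 hz.
have -> : d *: y + z = d *: (y + d^-1 *: z).
  by rewrite scalerDr scalerA mulfV ?gt_eqF // scale1r.
apply: CZ; first exact: ltW.
apply: h; rewrite normrZ gtr0_norm ?invr_gt0 // mulrC ltr_pdivrMr //.
by rewrite mulrC.
Qed.

Lemma order_unit p z : interior C p -> exists l : R, 0 < l /\ le z (l *: p).
Proof.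
move=> /int_near [r r0 h]; exists (2 * (`|z| + 1) / r); split.
  by rewrite divr_gt0 // mulr_gt0 // ltr_pwDr.
rewrite /cle; apply: h; first by rewrite divr_gt0 // mulr_gt0 // ltr_pwDr.
rewrite normrN divfK ?gt_eqF //.
have := normr_ge0 z; lra.
Qed.

End Basic.

Section F.
Context {R : realType} {X : normedModType R} (C : set X) (f : X -> X).
Hypothesis hC : closed_cone C.
Hypothesis hfi : forall y, interior C y -> interior C (f y).
Hypothesis hsub : subhomogeneous C (interior C) f.
Hypothesis hK : typeK_order_preserving C (interior C) f.
Local Notation le := (cle C).

Lemma fmono u v : interior C u -> interior C v -> le u v -> le (f u) (f v).
Proof.
move=> iu iv luv; have [e [e0 he]] := hK iu iv luv.
rewrite /cle /cle in luv he *.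
have := CD hC he (CZ hC (ltW e0) luv); by rewrite subrK.
Qed.

Lemma prop_up (b : R) u v : 1 <= b -> interior C u -> interior C v ->
  le u (b *: v) -> le (f u) (b *: f v).
Proof.
move=> b1 iu iv h; have ibv : interior C (b *: v) by apply: int_scale => //; lra.
exact: (ole_trans hC (fmono iu ibv h) (hsub b1 iv)).
Qed.

Lemma prop_dn (a : R) u v : 0 < a -> a <= 1 -> interior C u -> interior C v ->
  le (a *: v) u -> le (a *: f v) (f u).
Proof.
move=> a0 a1 iu iv h; have iav : interior C (a *: v) by apply: int_scale.
suff h3 : le (a *: f v) (f (a *: v)) by exact: (ole_trans hC h3 (fmono iav iu h)).
have a1' : 1 <= a^-1 by rewrite invf_ge1.
have h2 := hsub a1' iav.
rewrite scalerA mulVf ?gt_eqF // scale1r in h2.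
have := ole_scale hC (ltW a0) h2.
by rewrite scalerA mulfV ?gt_eqF // scale1r.
Qed.

Lemma iter_int y j : interior C y -> interior C (iter j f y).
Proof. by move=> iy; elim: j => //= j IH; apply: hfi. Qed.

Lemma iter_up (b : R) u v j : 1 <= b -> interior C u -> interior C v ->
  le u (b *: v) -> le (iter j f u) (b *: iter j f v).
Proof.
move=> b1 iu iv h; elim: j => //= j IH; apply: prop_up => //; exact: iter_int.
Qed.

Lemma iter_dn (a : R) u v j : 0 < a -> a <= 1 -> interior C u -> interior C v ->
  le (a *: v) u -> le (a *: iter j f v) (iter j f u).
Proof.
move=> a0 a1 iu iv h; elim: j => //= j IH; apply: prop_dn => //; exact: iter_int.
Qed.
End F.


Lemma dchoice {R : realType} (b g : R) : 0 < b -> b < g ->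
  [/\ 0 < (g - b)/(g + b), (g - b)/(g + b) < 1 &
     (1 - (g - b)/(g + b))^-1 * (b * (1 + (g - b)/(g + b))) = g].
Proof.
move=> b0 bg; have gb0 : 0 < g + b by lra.
split.
- by rewrite divr_gt0 //; lra.
- by rewrite ltr_pdivrMr //; lra.
- have h1 : 1 - (g - b)/(g + b) = 2 * b / (g + b) by field; lra.
  have h2 : 1 + (g - b)/(g + b) = 2 * g / (g + b) by field; lra.
  rewrite h1 h2; field; apply/andP; split; apply/eqP; lra.
Qed.

Section CS.
Context {R : realType} {X : normedModType R} (C : set X).
Hypothesis hC : closed_cone C.
Hypothesis C0 : C 0.
Local Notation le := (cle C).

Lemma Csum (F : nat -> X) N : (forall j, C (F j)) -> C (\sum_(j < N) F j).
Proof. by move=> h; elim: N => [|N IH]; rewrite ?big_ord0 // big_ord_recr /=; apply: CD. Qed.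

Lemma ole_sum (F G : nat -> X) N : (forall j, le (F j) (G j)) ->
  le (\sum_(j < N) F j) (\sum_(j < N) G j).
Proof. move=> h; rewrite /cle -sumrB; exact: (@Csum (fun j => G j - F j) N h). Qed.
End CS.


Lemma vec_id {R : realType} {X : normedModType R} (a b c d e : X) :
  a - c - (d - e) = (a - b - d) + (b - c + e).
Proof.
rewrite opprB addrA [RHS]addrA [in RHS](addrAC a) -[in RHS](addrA (a - d)) addKr.
by rewrite addrAC (addrAC a (-c)).
Qed.

Section Core.
Context {R : realType} {X : normedModType R} (C : set X) (f : X -> X).
Hypothesis hC : closed_cone C.
Hypothesis hfi : forall y, interior C y -> interior C (f y).
Hypothesis hsub : subhomogeneous C (interior C) f.
Hypothesis hK : typeK_order_preserving C (interior C) f.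
Local Notation le := (cle C).
Variables (p : X) (d0 B : R).
Hypotheses (ip : interior C p) (d00 : 0 < d0) (B0 : 0 < B).
Variables (u v U V : nat -> X).
Hypotheses (hu : forall n, u n.+1 = f (u n)) (hv : forall n, v n.+1 = f (v n)).
Hypotheses (hU : forall n, U n.+1 = f (U n)) (hV : forall n, V n.+1 = f (V n)).
Hypotheses (iu : forall n, interior C (u n)) (iv : forall n, interior C (v n)).
Hypotheses (iU : forall n, interior C (U n)) (iV : forall n, interior C (V n)).
Hypotheses (bv : forall n, le (d0 *: p) (v n)) (bu : forall n, le (u n) (B *: p)).
Hypotheses (bV1 : forall n, le (d0 *: p) (V n)) (bV2 : forall n, le (V n) (B *: p)).
Hypothesis tel : forall N, C (\sum_(j < N) V j - \sum_(j < N) U j + B *: p).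
Hypothesis appr : forall (d : R) n0, 0 < d -> d < 1 -> exists2 n, (n0 <= n)%N &
  forall j, [/\ le ((1 - d) *: U j) (u (n + j)), le (u (n + j)) ((1 + d) *: U j),
               le ((1 - d) *: V j) (v (n + j)) & le (v (n + j)) ((1 + d) *: V j)].

Lemma core : le (U 0) (V 0).
Proof.
have C0 : C 0 by have := CZ hC (lexx 0) (int_C ip); rewrite scale0r.
pose S := [set b : R | 1 <= b /\ exists n0, forall n, (n0 <= n)%N -> le (u n) (b *: v n)].
have S0 : S (1 + B / d0).
  have hBd : 0 <= B / d0 by rewrite divr_ge0 // ltW.
  split; first lra.
  exists 0%N => n _.
  have h1 : le (u n) ((B / d0) *: v n).
    apply: (ole_trans hC (bu n)).
    have -> : B *: p = (B / d0) *: (d0 *: p) by rewrite scalerA divfK ?gt_eqF.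
    by apply: (ole_scale hC _ (bv n)); rewrite divr_ge0 // ltW.
  apply: (ole_trans hC h1); apply: (ole_smono hC _ (int_C (iv n))).
  lra.
have Sne : S !=set0 by exists (1 + B / d0).
have Slb : lbound S 1 by move=> b [].
have Shl : has_lbound S by exists 1.
set sig := inf S.
have sig1 : 1 <= sig by apply: lb_le_inf.
have P1 : forall b, sig < b -> exists n0, forall n, (n0 <= n)%N -> le (u n) (b *: v n).
  move=> b hb; have [y [y1 [n0 hn0]] yb] := inf_lt Sne hb.
  exists n0 => n /hn0 h; apply: (ole_trans hC h); apply: (ole_smono hC _ (int_C (iv n))).
  exact: ltW.
have P2 : forall t, 1 <= t -> t < sig -> forall n, ~ le (u n) (t *: v n).
  move=> t t1 ts n h.
  have : S t.
    split => //; exists n => m /subnKC <-; elim: (m - n)%N => [|k IH]; first by rewrite addn0.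
    by rewrite addnS hu hv; apply: (prop_up hC hsub hK).

  by move=> /(ge_inf Shl); rewrite -/sig; lra.
have L : forall j, le (U j) (sig *: V j).
  move=> j; rewrite /cle; apply: (Clim hC (w := V j)) => e e0.
  pose g := sig + e; pose b := sig + e / 2.
  have b0 : 0 < b by rewrite /b; lra.
  have bg : b < g by rewrite /b /g; lra.
  have [d0' d1 dE] := dchoice b0 bg.
  set d := (g - b) / (g + b) in d0' d1 dE.
  have sb : sig < b by rewrite /b; lra.
  have [n0 hn0] := P1 b sb.
  have [n hn H] := appr n0 d0' d1.
  have [h1 _ _ h3] := H j.
  have h2 := hn0 (n + j)%N (leq_trans hn (leq_addr _ _)).
  have h4 : le ((1 - d) *: U j) ((b * (1 + d)) *: V j).
    apply: (ole_trans hC h1); apply: (ole_trans hC h2).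
    by rewrite -scalerA; apply: (ole_scale hC _ h3); lra.
  have dd : 0 <= (1 - d)^-1 by rewrite invr_ge0; lra.
  have h5 := ole_scale hC dd h4.
  rewrite scalerA mulVf ?scale1r in h5; last by apply/eqP; lra.
  rewrite scalerA dE in h5.
  by rewrite /cle /g scalerDl addrAC in h5.
have Strict : forall t j, 1 <= t -> t < sig -> ~ le (U j) (t *: V j).
  move=> t j t1 ts h.
  pose g := (t + sig) / 2.
  have t0 : 0 < t by lra.
  have tg : t < g by rewrite /g; lra.
  have [d0' d1 dE] := dchoice t0 tg.
  set d := (g - t) / (g + t) in d0' d1 dE.
  have [n _ H] := appr 0 d0' d1.
  have [_ h1 h2 _] := H j.
  have h3 : le (u (n + j)) (((1 + d) * t) *: V j).
    apply: (ole_trans hC h1); rewrite -scalerA; apply: (ole_scale hC _ h) => //; lra.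
  have dd : 0 <= (1 - d)^-1 by rewrite invr_ge0; lra.
  have h4 := ole_scale hC dd h2.
  rewrite scalerA mulVf ?scale1r in h4; last by apply/eqP; lra.
  have h5 : le (u (n + j)) (g *: v (n + j)).
    apply: (ole_trans hC h3); rewrite -dE [(1 + d) * t]mulrC [_^-1 * _]mulrC -scalerA.
    rewrite scalerA -[X in le _ X]scalerA; apply: (ole_scale hC _ h4); apply: mulr_ge0; lra.
  apply: (P2 g) h5; rewrite /g; lra.
have [sig_le1 | sig_gt1] := leP sig 1.
  have := L 0%N; have -> : sig = 1 by apply: le_anti; rewrite sig_le1 sig1.
  by rewrite scale1r.
exfalso.
pose a j := sig *: V j - U j.
have chain : forall j, exists2 e : R, 0 < e & le (e *: a j) (a j.+1).
  move=> j; have isV : interior C (sig *: V j) by apply: (int_scale hC (iV j)); lra.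
  have [e [e0 he]] := hK (iU j) isV (L j).
  exists e => //; apply: (ole_trans hC he); rewrite /a hU hV /cle.
  have := hsub (ltW sig_gt1) (iV j); rewrite /cle.
  by rewrite opprB addrA subrK.
have Csa : forall N, C (\sum_(j < N) a j).
  by move=> N; apply: (@Csum _ _ _ hC C0 a N) => j; exact: (L j).
have chainsum : forall N, exists2 c : R, 0 < c & le (c *: \sum_(j < N.+1) a j) (a N).
  elim => [|N [c c0 IH]].
    exists 1 => //; rewrite big_ord1 scale1r; exact: ole_refl.
  have [e e0 he] := chain N.
  have m0 : 0 < Order.min (e * c) 1 by rewrite lt_min mulr_gt0 // ltr01.
  exists (Order.min (e * c) 1 / 2); first by rewrite divr_gt0.
  have h2 : 2^-1 + 2^-1 = 1 :> R by field.
  suff : le ((Order.min (e * c) 1 / 2) *: \sum_(j < N.+2) a j)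
            (2^-1 *: a N.+1 + 2^-1 *: a N.+1) by rewrite -scalerDl h2 scale1r.
  rewrite big_ord_recr /= scalerDr; apply: (ole_add hC).
    have s1 : le ((Order.min (e * c) 1 / 2) *: \sum_(j < N.+1) a j)
                 ((2^-1 * e) *: (c *: \sum_(j < N.+1) a j)).
      rewrite scalerA; apply: (ole_smono hC _ (Csa _)).
      rewrite mulrC -mulrA; apply: ler_wpM2l; first by rewrite invr_ge0.
      by rewrite ge_min lexx.
    apply: (ole_trans hC s1); rewrite -scalerA; apply: (ole_scale hC _ _).
      by rewrite invr_ge0.
    by apply: (ole_trans hC (ole_scale hC (ltW e0) IH)).
  apply: (ole_smono hC _ (L _)).
  rewrite ler_pdivrMr // mulVf // ge_min lexx orbT //.
have [N hN] : exists N : nat, (B + 1) / ((sig - 1) * d0) < N.+1%:R.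
  by eexists; apply: truncnS_gt.
have sd0 : 0 < (sig - 1) * d0 by rewrite mulr_gt0 // subr_gt0.
have hK1 : B + 1 < (sig - 1) * (N.+1%:R * d0).
  by move: hN; rewrite ltr_pdivrMr // mulrCA.
have sumV : forall M, le ((M%:R * d0) *: p) (\sum_(j < M) V j).
  elim => [|M IH]; first by rewrite big_ord0 mul0r scale0r; exact: ole_refl.
  rewrite big_ord_recr /= -addn1 natrD mulrDl mul1r scalerDl.
  exact: (ole_add hC IH (bV1 M)).
have sa : \sum_(j < N.+1) a j = sig *: \sum_(j < N.+1) V j - \sum_(j < N.+1) U j.
  by rewrite /a sumrB scaler_sumr.
have pa : le p (\sum_(j < N.+1) a j).
  have e1 : le (1 *: p) (((sig - 1) * (N.+1%:R * d0) - B) *: p).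
    apply: (ole_smono hC _ (int_C ip)); lra.
  rewrite scale1r in e1; apply: (ole_trans hC e1).
  rewrite /cle sa scalerBl (vec_id _ (\sum_(j < N.+1) V j)); apply: (CD hC _ (tel N.+1)).
  have e2 : sig *: \sum_(j < N.+1) V j - \sum_(j < N.+1) V j = (sig - 1) *: \sum_(j < N.+1) V j.
    by rewrite scalerBl scale1r.
  rewrite e2 -scalerA -scalerBr; apply: (CZ hC); first lra.
  exact: (sumV N.+1).
have [c c0 hc] := chainsum N.
have cp : le (c *: p) (a N) := ole_trans hC (ole_scale hC (ltW c0) pa) hc.
have cV : le ((c / B) *: V N) (c *: p).
  have := ole_scale hC (l := c / B) _ (bV2 N).
  rewrite scalerA divfK ?gt_eqF //; apply; by rewrite divr_ge0 // ltW.
have h := ole_trans hC cV cp.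
have hU' : le (U N) ((sig - c / B) *: V N).
  by move: h; rewrite /cle /a scalerBl addrAC.
have cB0 : 0 < c / B by rewrite divr_gt0.
apply: (Strict (Order.max (sig - c / B) 1) N).
- by rewrite le_max lexx orbT.
- by rewrite gt_max sig_gt1 andbT; lra.
apply: (ole_trans hC hU'); apply: (ole_smono hC _ (int_C (iV N))).
by rewrite le_max lexx.
Qed.
End Core.


Section Topo.
Context {R : realType} {X : normedModType R}.

Lemma clusterP (xs : nat -> X) q : cluster (xs @ \oo) q ->
  forall n0 (r : R), 0 < r -> exists2 n, (n0 <= n)%N & `|q - xs n| < r.
Proof.
move=> cl n0 r r0.
have FA : (xs @ \oo) (xs @` [set n | (n0 <= n)%N]).
  by exists n0 => // n /= hn; exists n.
have nB : nbhs q (ball q r) by apply: nbhsx_ballx.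
have [y [[n hn <-] hy]] := cl _ _ FA nB.
by exists n => //; move: hy; rewrite -ball_normE.
Qed.

Lemma unique_cluster_cvg (K : set X) (xs : nat -> X) q : compact K ->
  (forall n, K (xs n)) -> (forall q', cluster (xs @ \oo) q' -> q' = q) ->
  xs @ \oo --> q.
Proof.
move=> cK Kx uq U nU; apply: contrapT => nFU.
pose F := xs @ \oo.
pose G := fun A : set X => F (U `|` A).
have FG : Filter G.
  constructor.
  - rewrite /G setUT; exact: (@filterT _ F _).
  - move=> A B GA GB; rewrite /G; apply: (@filterS _ F _ _ _ _ (@filterI _ F _ _ _ GA GB)).
    by move=> y [[Uy|Ay] [Uy'|By]]; [left|left|left|right].
  - by move=> A B AB GA; apply: (@filterS _ F _ _ _ _ GA) => y [Uy|Ay]; [left|right; apply: AB].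
have PG : ProperFilter G.
  by split; [rewrite /G setU0 | exact: FG].
have FK : F K by exists 0%N => // n _; exact: Kx.
have GK0 := @filterS _ F _ _ _ (@subsetUr _ U K) FK.
have GK : G K by apply: GK0; typeclasses eauto.
have [q' [Kq' clq']] := cK G PG GK.
have clF : cluster F q'.
  move=> A B FA nB; apply: clq' nB; exact: (@filterS _ F _ _ _ (@subsetUr _ U A) FA).
rewrite (uq q' clF) in clq'.
have GnU : G (~` U) by rewrite /G setUCr; exact: (@filterT _ F _).
by have [y [nUy Uy]] := clq' _ _ GnU nU.
Qed.
End Topo.


Lemma tele {R : realType} {X : normedModType R} (g : nat -> X) N :
  \sum_(j < N) g j.+1 - \sum_(j < N) g j = g N - g 0%N.
Proof.
rewrite -sumrB -(big_mkord xpredT (fun j => g j.+1 - g j)) telescope_sumr //.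
Qed.

Lemma Clim2 {R : realType} {X : normedModType R} (C : set X) v w :
  closed_cone C -> C w -> (forall d : R, 0 < d -> d < 1 -> C (v + d *: w)) -> C v.
Proof.
move=> hC Cw h; apply: (Clim hC (w := w)) => e e0.
pose d := Order.min e 2^-1.
have d0 : 0 < d by rewrite lt_min e0 invr_gt0 ltr0Sn.
have d1 : d < 1 by rewrite /d gt_min; apply/orP; right; rewrite invf_lt1 // ltr1n.
have de : d <= e by rewrite /d ge_min lexx.
have -> : v + e *: w = (v + d *: w) + (e - d) *: w.
  by rewrite scalerBl addrCA addrK addrC.
by apply: (CD hC (h d d0 d1)); apply: (CZ hC) => //; rewrite subr_ge0.
Qed.

Unset Implicit Arguments.
Set Strict Implicit.

Theorem mainTheorem1 (R : realType) (X : completeNormedModType R)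
  (C : set X) (f : X -> X) (x : X) :
  closed_cone C ->
  (exists z, (interior C) z) ->
  (forall y, (interior C) y -> (interior C) (f y)) ->
  subhomogeneous C (interior C) f ->
  typeK_order_preserving C (interior C) f ->
  (exists p, (interior C) p /\ f p = p) ->
  (interior C) x ->
  compact (closure (range (fun k : nat => iter k f x))) ->
  exists p, [/\ (interior C) p, f p = p &
                (fun k : nat => iter k f x) @ \oo --> p].
Proof.
move=> hC _ hfi hsub hK [p [ip fp]] ix cK.
set xs := fun k : nat => iter k f x.
have C0 : C 0 by have := CZ hC (lexx 0) (int_C ip); rewrite scale0r.
have ixs : forall n, interior C (xs n) by move=> n; exact: iter_int.
have fpj : forall j, iter j f p = p by elim => //= j ->.
have [d0 [d00 d01 hd0]] : exists d0 : R, [/\ 0 < d0, d0 <= 1 & cle C (d0 *: p) x].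
  have [r r0 hr] := int_ball ix.
  pose d1 := r / (2 * (`|p| + 1)).
  have p1 : 0 < `|p| + 1 by rewrite ltr_pwDr.
  have d10 : 0 < d1 by rewrite divr_gt0 // mulr_gt0.
  exists (Order.min d1 1); split.
  - by rewrite lt_min d10 ltr01.
  - by rewrite ge_min lexx orbT.
  - have h1 : C (x - d1 *: p).
      apply: hr; rewrite normrN normrZ gtr0_norm // /d1.
      rewrite mulrAC ltr_pdivrMr ?mulr_gt0 // ltr_pM2l //.
      have := normr_ge0 p; lra.
    rewrite /cle; have -> : x - Order.min d1 1 *: p = (x - d1 *: p) + (d1 - Order.min d1 1) *: p.
      by rewrite scalerBl addrA subrK.
    apply: (CD hC h1); apply: (CZ hC _ (int_C ip)); by rewrite subr_ge0 ge_min lexx.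
have [B [B1 hB]] : exists B : R, 1 <= B /\ cle C x (B *: p).
  have [l [l0 hl]] := order_unit hC x ip.
  exists (Order.max l 1); split; first by rewrite le_max lexx orbT.
  apply: (ole_trans hC hl); apply: (ole_smono hC _ (int_C ip)); by rewrite le_max lexx.
have B0 : 0 < B by lra.
have bxs1 : forall n, cle C (d0 *: p) (xs n).
  by move=> n; have := iter_dn hC hfi hsub hK n d00 d01 ix ip hd0; rewrite fpj.
have bxs2 : forall n, cle C (xs n) (B *: p).
  by move=> n; have := iter_up hC hfi hsub hK n B1 ix ip hB; rewrite fpj.
pose K := closure (range xs).
have Kx : forall n, K (xs n) by move=> n; apply: subset_closure; exists n.
have FK : (xs @ \oo) K by exists 0%N => // n _; exact: Kx.
have [y0 [_ cly0]] := cK _ _ FK.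
have approxy : forall y, interior C y -> cluster (xs @ \oo) y ->
    forall (d : R) n0, 0 < d -> d < 1 -> exists2 n, (n0 <= n)%N &
    cle C ((1 - d) *: y) (xs n) /\ cle C (xs n) ((1 + d) *: y).
  move=> y iy cly d n0 dd0 d1.
  have [r r0 hr] := int_near hC iy.
  have [n hn hyn] := clusterP cly n0 (mulr_gt0 dd0 r0).
  exists n => //; split; rewrite /cle.
  - have -> : xs n - (1 - d) *: y = d *: y + (xs n - y).
      by rewrite scalerBl scale1r opprB addrCA.
    by apply: hr => //; rewrite distrC.
  - have -> : (1 + d) *: y - xs n = d *: y + (y - xs n).
      by rewrite scalerDl scale1r (addrC y) -addrA.
    exact: hr.
have capprox : forall y v, cluster (xs @ \oo) y -> (exists n0, forall n, (n0 <= n)%N -> C (v (xs n))) ->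
    (forall a b, v a - v b = b - a \/ v a - v b = a - b) -> C (v y).
  move=> y v cly [n0 hn0] hv; apply: (Capprox hC) => r r0.
  have [n hn hyn] := clusterP cly n0 r0.
  exists (v (xs n)); split; first exact: hn0.
  by case: (hv y (xs n)) => ->; rewrite // distrC.
have by01 : cle C (d0 *: p) y0.
  apply: (capprox y0 (fun z => z - d0 *: p) cly0); first by exists 0%N => n _; exact: bxs1.
  by move=> a b; right; rewrite opprB addrA subrK.
have by02 : cle C y0 (B *: p).
  apply: (capprox y0 (fun z => B *: p - z) cly0); first by exists 0%N => n _; exact: bxs2.
  by move=> a b; left; rewrite opprB addrC addrA subrK.
have iy0 : interior C y0.
  have -> : y0 = d0 *: p + (y0 - d0 *: p) by rewrite addrC subrK.
  by apply: (int_add hC); [apply: (int_scale hC ip) | exact: by01].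
pose ys := fun j => iter j f y0.
have iys : forall j, interior C (ys j) by move=> j; exact: iter_int.
have bys1 : forall n, cle C (d0 *: p) (ys n).
  by move=> n; have := iter_dn hC hfi hsub hK n d00 d01 iy0 ip by01; rewrite fpj.
have bys2 : forall n, cle C (ys n) (B *: p).
  by move=> n; have := iter_up hC hfi hsub hK n B1 iy0 ip by02; rewrite fpj.
have apj : forall (d : R) n0, 0 < d -> d < 1 -> exists2 n, (n0 <= n)%N & forall j,
    cle C ((1 - d) *: ys j) (xs (n + j)%N) /\ cle C (xs (n + j)%N) ((1 + d) *: ys j).
  move=> d n0 dd0 d1; have [n hn [h1 h2]] := approxy y0 iy0 cly0 d n0 dd0 d1.
  exists n => // j; rewrite /xs addnC iterD; split.
  - by apply: (iter_dn hC hfi hsub hK) => //; [lra | lra | exact: ixs].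
  - by apply: (iter_up hC hfi hsub hK) => //; [lra | exact: ixs].
have hxs : forall n, xs n.+1 = f (xs n) by [].
have hys : forall n, ys n.+1 = f (ys n) by [].
have A1 : cle C (ys 0%N) (ys 1%N).
  apply: (core hC hsub hK ip d00 B0 (u := xs) (v := fun n => xs n.+1)
            (U := ys) (V := fun n => ys n.+1)) => //.
  - move=> N; rewrite tele addrAC -addrA; apply: (CD hC (int_C (iys N))); exact: by02.
  - move=> d n0 dd0 d1; have [n hn H] := apj d n0 dd0 d1; exists n => // j.
    have [h1 h2] := H j; have [h3 h4] := H j.+1; rewrite -addnS.
    by split.
have A2 : cle C (ys 1%N) (ys 0%N).
  apply: (core hC hsub hK ip d00 B0 (u := fun n => xs n.+1) (v := xs)
            (U := fun n => ys n.+1) (V := ys)) => //.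
  - move=> N; rewrite -opprB tele opprB addrAC -addrA.
    apply: (CD hC (int_C iy0)); exact: bys2.
  - move=> d n0 dd0 d1; have [n hn H] := apj d n0 dd0 d1; exists n => // j.
    have [h1 h2] := H j; have [h3 h4] := H j.+1; rewrite -addnS.
    by split.
have fy0 : f y0 = y0 by have := ole_antisym hC A1 A2.
exists y0; split => //.
have fyj : forall j, iter j f y0 = y0 by elim => //= j ->.
apply: (unique_cluster_cvg cK Kx) => q' clq.
have ev : forall (d : R), 0 < d -> d < 1 -> exists n0, forall m, (n0 <= m)%N ->
    cle C ((1 - d) *: y0) (xs m) /\ cle C (xs m) ((1 + d) *: y0).
  move=> d dd0 d1; have [n _ [h1 h2]] := approxy y0 iy0 cly0 d 0%N dd0 d1.
  exists n => m /subnKC <-; rewrite /xs addnC iterD; split.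
  - have a0 : 0 < 1 - d by lra.
    have a1 : 1 - d <= 1 by lra.
    by have := iter_dn hC hfi hsub hK (m - n)%N a0 a1 (ixs n) iy0 h1; rewrite fyj.
  - have b1 : 1 <= 1 + d by lra.
    by have := iter_up hC hfi hsub hK (m - n)%N b1 (ixs n) iy0 h2; rewrite fyj.
have c1 : C (y0 - q').
  apply: (Clim2 hC (int_C iy0)) => d dd0 d1.
  have [n0 hn0] := ev d dd0 d1.
  have -> : y0 - q' + d *: y0 = (1 + d) *: y0 - q' by rewrite scalerDl scale1r addrAC.
  apply: (capprox q' (fun z => (1 + d) *: y0 - z) clq).
    by exists n0 => m /hn0 [].
  by move=> a b; left; rewrite opprB addrC addrA subrK.
have c2 : C (q' - y0).
  apply: (Clim2 hC (int_C iy0)) => d dd0 d1.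
  have [n0 hn0] := ev d dd0 d1.
  have -> : q' - y0 + d *: y0 = q' - (1 - d) *: y0 by rewrite scalerBl scale1r opprB addrA addrAC.
  apply: (capprox q' (fun z => z - (1 - d) *: y0) clq).
    by exists n0 => m /hn0 [].
  by move=> a b; right; rewrite opprB addrA subrK.
exact: (ole_antisym hC c1 c2).
Qed.
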